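(* Let $\Sigma$ be a ranked alphabet, $B$ a strong bimonoid, $\mathcal{A}=(Q,\delta,F)$ a $(\Sigma,B)$-wta and $\xi=\sigma(\xi_1,\dots,\xi_k)\in T_\Sigma$. Then: (i)(a) if $h^{\neq\mathbb{0}}_{\mathrm{V}(\mathcal{A})}(\xi_i)=\emptyset$ for some $i\in[k]$, then $h^{\neq\mathbb{0}}_{\mathrm{V}(\mathcal{A})}(\xi)=\emptyset$; (b) if $R^{\neq\mathbb{0}}_{\mathcal{A}}(\xi_i)=\emptyset$ for some $i\in[k]$, then $R^{\neq\mathbb{0}}_{\mathcal{A}}(\xi)=\emptyset$. Moreover, if $\mathcal{A}$ is bottom-up deterministic, then also: (ii) (a) $|h^{\neq\mathbb{0}}_{\mathrm{V}(\mathcal{A})}(\xi)|\le 1$ and (b) $|R^{\neq\mathbb{0}}_{\mathcal{A}}(\xi)|\le 1$; (iii) either (a) $h^{\neq\mathbb{0}}_{\mathrm{V}(\mathcal{A})}(\xi)=\emptyset=R^{\neq\mathbb{0}}_{\mathcal{A}}(\xi)$, or (b) there is $q\in Q$ with $h^{\neq\mathbb{0}}_{\mathrm{V}(\mathcal{A})}(\xi)=\{q\}=R^{\neq\mathbb{0}}_{\mathcal{A}}(\xi)$, and there is exactly one $\rho\in R_{\mathcal{A}}(q,\xi)$ with $\mathrm{wt}_{\mathcal{A}}(\rho)\neq\mathbb{0}$, and for it $h_{\mathrm{V}(\mathcal{A})}(\xi)_q=\mathrm{wt}_{\mathcal{A}}(\rho)$.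
   Context: Ranked alphabet $\Sigma$ (finite, with ranks; $\Sigma^{(k)}$ the symbols of rank $k$; $\Sigma^{(0)}\neq\emptyset$), trees $T_\Sigma$, positions $\mathrm{pos}(\xi)$ ($\mathrm{pos}(\sigma(\xi_1,\dots,\xi_k))=\{\varepsilon\}\cup\{iv\mid i\in[k],v\in\mathrm{pos}(\xi_i)\}$). A strong bimonoid $(B,\oplus,\otimes,\mathbb{0},\mathbb{1})$: $(B,\oplus,\mathbb{0})$ commutative monoid, $(B,\otimes,\mathbb{1})$ monoid, $\mathbb{0}\ne\mathbb{1}$, $\mathbb{0}$ multiplicatively absorbing; no distributivity. $\bigotimes_{i=1}^k a_i=a_1\otimes\cdots\otimes a_k$ ($\mathbb{1}$ if $k=0$). A $(\Sigma,B)$-wta is $\mathcal{A}=(Q,\delta,F)$, $Q$ finite nonempty, $\delta_k:Q^k\times\Sigma^{(k)}\times Q\to B$, $F:Q\to B$. $h_{\mathrm{V}(\mathcal{A})}:T_\Sigma\to B^Q$ is defined recursively by $h_{\mathrm{V}(\mathcal{A})}(\sigma(\xi_1,\dots,\xi_k))_q=\bigoplus_{q_1,\dots,q_k\in Q}\big(\bigotimes_{i=1}^k h_{\mathrm{V}(\mathcal{A})}(\xi_i)_{q_i}\big)\otimes\delta_k(q_1\dots q_k,\sigma,q)$. A run on $\xi$ is a map $\rho:\mathrm{pos}(\xi)\to Q$; it is a $q$-run if $\rho(\varepsilon)=q$; $R_{\mathcal{A}}(q,\xi)$ is the set of $q$-runs; $\rho|_i(w)=\rho(iw)$; $\mathrm{wt}_{\mathcal{A}}(\rho)=\big(\bigotimes_{i=1}^k\mathrm{wt}_{\mathcal{A}}(\rho|_i)\big)\otimes\delta_k(\rho(1)\dots\rho(k),\sigma,\rho(\varepsilon))$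 for $\xi=\sigma(\xi_1,\dots,\xi_k)$. $h^{\neq\mathbb{0}}_{\mathrm{V}(\mathcal{A})}(\xi)=\{q\in Q\mid h_{\mathrm{V}(\mathcal{A})}(\xi)_q\neq\mathbb{0}\}$ and $R^{\neq\mathbb{0}}_{\mathcal{A}}(\xi)=\{q\in Q\mid \exists\rho\in R_{\mathcal{A}}(q,\xi):\mathrm{wt}_{\mathcal{A}}(\rho)\neq\mathbb{0}\}$. $\mathcal{A}$ is bottom-up deterministic if for all $k,\sigma\in\Sigma^{(k)},q_1,\dots,q_k$ there is at most one $q$ with $\delta_k(q_1\dots q_k,\sigma,q)\ne\mathbb{0}$. *)

(* Defs.v *)
From mathcomp Require Import all_boot.
Set Implicit Arguments. Unset Strict Implicit. Unset Printing Implicit Defensive.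

Record strong_bimonoid := StrongBimonoid {
  bcar :> Type;
  badd : bcar -> bcar -> bcar;
  bmul : bcar -> bcar -> bcar;
  bzero : bcar;
  bone : bcar;
  baddA : forall a b c, badd a (badd b c) = badd (badd a b) c;
  baddC : forall a b, badd a b = badd b a;
  badd0r : forall a, badd a bzero = a;
  bmulA : forall a b c, bmul a (bmul b c) = bmul (bmul a b) c;
  bmul1l : forall a, bmul bone a = a;
  bmul1r : forall a, bmul a bone = a;
  bmul0l : forall a, bmul bzero a = bzero;
  bmul0r : forall a, bmul a bzero = bzero;
  bzero_neq_one : bzero <> bone
}.

(* Trees over a ranked alphabet (Sigma, rank): a node labelled s has exactly
   rank s children, indexed by 'I_(rank s) (child i = the paper's child i+1). *)
Inductive tree (Sigma : Type) (rank : Sigma -> nat) : Type :=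
  Node (s : Sigma) of ('I_(rank s) -> tree rank).
Arguments Node {Sigma rank} s _.

Section Wta.
Variables (Sigma : Type) (rank : Sigma -> nat).

Fixpoint posb (t : tree rank) (w : seq nat) : bool :=
  match t with
  | Node s ch =>
      match w with
      | [::] => true
      | i :: w' => [exists j : 'I_(rank s), (nat_of_ord j == i) && posb (ch j) w']
      end
  end.

Definition pos_of (t : tree rank) := {w : seq nat | posb t w}.

Lemma posb_root (t : tree rank) : posb t [::].
Proof. by case: t. Qed.

Definition root_pos (t : tree rank) : pos_of t := exist _ [::] (posb_root t).

Lemma posb_child s (ch : 'I_(rank s) -> tree rank) (j : 'I_(rank s)) w :
  posb (ch j) w -> posb (Node s ch) (nat_of_ord j :: w).
Proof. by move=> H /=; apply/existsP; exists j; rewrite eqxx H. Qed.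

Variables (B : strong_bimonoid) (Q : finType).

(* a (Sigma,B)-wta: delta s qs q = delta_k(q_1..q_k, s, q), F final weights *)
Record wta := Wta {
  delta : forall s : Sigma, {ffun 'I_(rank s) -> Q} -> Q -> B;
  finalw : Q -> B
}.
Arguments delta w s qs q : clear implicits.

Variable A : wta.

Fixpoint hV (t : tree rank) : Q -> B :=
  match t with
  | Node s ch => fun q =>
      \big[@badd B/bzero B]_(qs : {ffun 'I_(rank s) -> Q})
        bmul (\big[@bmul B/bone B]_(i < rank s) hV (ch i) (qs i))
             (delta A s qs q)
  end.

Definition run (t : tree rank) := pos_of t -> Q.

Definition restrict s (ch : 'I_(rank s) -> tree rank) (rho : run (Node s ch))
  (j : 'I_(rank s)) : run (ch j) :=
  fun p => rho (exist _ (nat_of_ord j :: sval p) (posb_child (svalP p))).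
Arguments restrict {s ch} rho j _.

Fixpoint wt (t : tree rank) : run t -> B :=
  match t return run t -> B with
  | Node s ch => fun rho =>
      bmul (\big[@bmul B/bone B]_(i < rank s) wt (restrict rho i))
           (delta A s [ffun i => restrict rho i (root_pos (ch i))]
                  (rho (root_pos (Node s ch))))
  end.

Definition qrun (q : Q) (t : tree rank) (rho : run t) : Prop :=
  rho (root_pos t) = q.

Definition hV_nz (t : tree rank) : Q -> Prop := fun q => hV t q <> bzero B.
Definition R_nz (t : tree rank) : Q -> Prop :=
  fun q => exists rho : run t, qrun q rho /\ wt rho <> bzero B.

Definition bu_deterministic : Prop :=
  forall (s : Sigma) (qs : {ffun 'I_(rank s) -> Q}) (q q' : Q),
    delta A s qs q <> bzero B -> delta A s qs q' <> bzero B -> q = q'.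

End Wta.
Arguments run {Sigma rank} Q t.

Definition is_empty (Q : Type) (S : Q -> Prop) : Prop := forall q, ~ S q.
Definition at_most_one (Q : Type) (S : Q -> Prop) : Prop :=
  forall q q', S q -> S q' -> q = q'.
Definition is_singleton (Q : Type) (S : Q -> Prop) (q : Q) : Prop :=
  forall q', S q' <-> q' = q.

(* Main.v *)
Require Import Defs.
From mathcomp Require Import all_boot.
From Stdlib Require Import FunctionalExtensionality Classical ClassicalEpsilon.
Set Implicit Arguments. Unset Strict Implicit. Unset Printing Implicit Defensive.

Notation rst r i := (@restrict _ _ _ _ _ r i).
Section L.
Variables (Sigma : Type) (rank : Sigma -> nat) (B : strong_bimonoid) (Q : finType).
Variable A : wta rank B Q.

Lemma prod0 (I : eqType) (r : seq I) (F : I -> B) j :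
  j \in r -> F j = bzero B -> \big[@bmul B/bone B]_(i <- r) F i = bzero B.
Proof.
elim: r => // x r IH; rewrite in_cons big_cons => /orP [/eqP <- -> | /IH H /H ->].
  by rewrite bmul0l. by rewrite bmul0r.
Qed.

Lemma prod0_ord n (F : 'I_n -> B) j :
  F j = bzero B -> \big[@bmul B/bone B]_(i < n) F i = bzero B.
Proof. by apply: prod0; rewrite mem_index_enum. Qed.

Lemma sum0 (I : Type) (r : seq I) (P : pred I) (F : I -> B) :
  (forall i, P i -> F i = bzero B) -> \big[@badd B/bzero B]_(i <- r | P i) F i = bzero B.
Proof.
move=> H; apply: (big_ind (fun x => x = bzero B)) => //.
by move=> x y -> ->; rewrite badd0r.
Qed.

Lemma sum1 (I : eqType) (r : seq I) (F : I -> B) j :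
  uniq r -> (forall i, i != j -> F i = bzero B) ->
  \big[@badd B/bzero B]_(i <- r) F i = if j \in r then F j else bzero B.
Proof.
move=> + H; elim: r => [|x r IH]; first by rewrite big_nil.
rewrite big_cons in_cons /= => /andP [xr ur]; rewrite IH //.
case: (eqVneq x j) xr => [-> | xj] xr /=.
  by rewrite (negbTE xr) badd0r.
by rewrite H // baddC badd0r.
Qed.

Lemma run_ext (t : tree rank) (r1 r2 : run Q t) :
  (forall w (H : posb t w), r1 (exist _ w H) = r2 (exist _ w H)) -> r1 = r2.
Proof. by move=> H; apply: functional_extensionality => -[w Hw]. Qed.

Lemma run_ext_node (s : Sigma) (ch : 'I_(rank s) -> tree rank) (r1 r2 : run Q (Node s ch)) :
  r1 (root_pos _) = r2 (root_pos _) -> (forall i, rst r1 i = rst r2 i) -> r1 = r2.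
Proof.
move=> Hr Hi; apply: run_ext => -[|j w] H.
  by have -> : exist _ [::] H = root_pos (Node s ch) by apply: val_inj.
have := H; rewrite /= => /existsP [j' /andP [/eqP ej Hw]].
have F : forall (r : run Q (Node s ch)) p1 p2, sval p1 = sval p2 -> r p1 = r p2.
  by move=> r p1 p2 e; congr r; apply: val_inj.
pose p : pos_of (ch j') := exist _ w Hw.
have E := congr1 (fun f => f p) (Hi j').
rewrite /restrict in E.
set P := @exist (seq nat) (fun w => posb (Node s ch) w) _ (posb_child (svalP p)) in E.
rewrite (F r1 _ P); last by rewrite /= ej.
by rewrite E; apply: F; rewrite /= ej.
Qed.

Definition mkrun (s : Sigma) (ch : 'I_(rank s) -> tree rank) (rhos : forall i, run Q (ch i)) (q0 : Q)
  : run Q (Node s ch) :=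
  fun p => match sval p with
           | [::] => q0
           | j :: w => match insub j : option 'I_(rank s) with
                       | Some j' => match insub w : option (pos_of (ch j')) with
                                    | Some p' => rhos j' p'
                                    | None => q0 end
                       | None => q0 end
           end.

Lemma mkrun_root (s : Sigma) ch rhos q0 : @mkrun s ch rhos q0 (root_pos _) = q0.
Proof. by []. Qed.

Lemma mkrun_restrict (s : Sigma) ch rhos q0 i : rst (@mkrun s ch rhos q0) i = rhos i.
Proof.
apply: functional_extensionality => p.
rewrite /restrict /mkrun /=.
have -> : insub (nat_of_ord i) = Some i by exact: (valK i).
by rewrite (valK p).
Qed.

Lemma wt_node (s : Sigma) (ch : 'I_(rank s) -> tree rank) (rho : run Q (Node s ch)) :
  wt A rho = bmul (\big[@bmul B/bone B]_(i < rank s) wt A (rst rho i))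
           (delta A [ffun i => rst rho i (root_pos (ch i))] (rho (root_pos (Node s ch)))).
Proof. by []. Qed.


Definition Inv (t : tree rank) : Prop :=
  ((forall q, hV A t q = bzero B) /\ (forall rho : run Q t, wt A rho = bzero B))
  \/ exists q (rho : run Q t), [/\ rho (root_pos t) = q, wt A rho <> bzero B,
       hV A t q = wt A rho, (forall q', q' <> q -> hV A t q' = bzero B)
       & (forall rho', wt A rho' <> bzero B -> rho' = rho)].

Lemma hV_node (s : Sigma) (ch : 'I_(rank s) -> tree rank) q :
  hV A (Node s ch) q = \big[@badd B/bzero B]_(qs : {ffun 'I_(rank s) -> Q})
        bmul (\big[@bmul B/bone B]_(i < rank s) hV A (ch i) (qs i)) (delta A qs q).
Proof. by []. Qed.

Lemma inv_all (det : bu_deterministic A) t : Inv t.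
Proof.
elim: t => s ch IH.
case: (classic (exists i, (forall q, hV A (ch i) q = bzero B) /\
                          (forall rho : run Q (ch i), wt A rho = bzero B))) => [[i [H1 H2]] | Hn].
  left; split.
    move=> q; rewrite hV_node; apply: sum0 => qs _.
    by rewrite (@prod0_ord _ _ i) ?bmul0l.
  by move=> rho; rewrite wt_node (@prod0_ord _ _ i) ?bmul0l.
have Hex : forall i, exists rho : run Q (ch i), [/\ wt A rho <> bzero B,
       hV A (ch i) (rho (root_pos _)) = wt A rho, (forall q', q' <> rho (root_pos _) -> hV A (ch i) q' = bzero B)
       & (forall rho', wt A rho' <> bzero B -> rho' = rho)].
  move=> i; case: (IH i) => [H | [q [rho [Hr H1 H2 H3 H4]]]].
    by case: Hn; exists i.
  by exists rho; subst q; split.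
pose rhos i := proj1_sig (constructive_indefinite_description _ (Hex i)).
have spec : forall i, _ := fun i => proj2_sig (constructive_indefinite_description _ (Hex i)).
pose qs0 := [ffun i => rhos i (root_pos (ch i))].
have hVeq : forall q, hV A (Node s ch) q =
    bmul (\big[@bmul B/bone B]_(i < rank s) wt A (rhos i)) (delta A qs0 q).
  move=> q; rewrite hV_node (@sum1 _ _ _ qs0); first last.
  - move=> qs nq.
    have [i Hi] : exists i, qs i <> qs0 i.
      apply: NNPP => Hc; move/eqP: nq; apply; apply/ffunP => i.
      by apply: NNPP => Hd; apply: Hc; exists i.
    rewrite (@prod0_ord _ _ i) ?bmul0l //.
    case: (spec i) => _ _ H3 _; apply: H3; move: Hi; by rewrite ffunE.
  - exact: index_enum_uniq.
  rewrite mem_index_enum.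
    congr bmul; apply: eq_bigr => i _; rewrite ffunE.
    by case: (spec i).
have Hnz : forall rho' : run Q (Node s ch), wt A rho' <> bzero B ->
    (forall i, rst rho' i = rhos i) /\ delta A qs0 (rho' (root_pos _)) <> bzero B.
  move=> rho'; rewrite wt_node => Hw.
  have Hi : forall i, rst rho' i = rhos i.
    move=> i; case: (spec i) => _ _ _ H4; apply: H4 => H0.
    by apply: Hw; rewrite (@prod0_ord _ _ i) ?bmul0l.
  split => // H0; apply: Hw.
  suff -> : [ffun i => rst rho' i (root_pos (ch i))] = qs0 by rewrite H0 bmul0r.
  by apply/ffunP => i; rewrite !ffunE Hi.
case: (classic (exists q0, delta A qs0 q0 <> bzero B)) => [[q0 Hq0] | Hnq].
  pose rho := mkrun rhos q0.
  have wtrho : wt A rho = hV A (Node s ch) q0.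
    rewrite wt_node hVeq /rho mkrun_root.
    have -> : [ffun i => rst rho i (root_pos (ch i))] = qs0.
      by apply/ffunP => i; rewrite !ffunE mkrun_restrict.
    congr bmul; apply: eq_bigr => i _; by rewrite mkrun_restrict.
  have U : forall rho', wt A rho' <> bzero B -> rho' = rho.
    move=> rho' /Hnz [H1 H2].
    apply: run_ext_node; first by rewrite /rho mkrun_root; apply: (det _ _ _ _ H2 Hq0).
    by move=> i; rewrite /rho mkrun_restrict H1.
  have Hoth : forall q', q' <> q0 -> hV A (Node s ch) q' = bzero B.
    move=> q' nq; rewrite hVeq.
    case: (classic (delta A qs0 q' = bzero B)) => [-> | H]; first by rewrite bmul0r.
    by case: nq; apply: (det _ _ _ _ H Hq0).
  case: (classic (wt A rho = bzero B)) => Hw.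
    left; split.
      move=> q; case: (classic (q = q0)) => [-> | nq]; last exact: Hoth.
      by rewrite -wtrho.
    move=> rho'; apply: NNPP => H; have E := U _ H; apply: H; by rewrite E.
  right; exists q0, rho; split => //.
left; split.
  move=> q; rewrite hVeq.
  case: (classic (delta A qs0 q = bzero B)) => [-> | H]; first by rewrite bmul0r.
  by case: Hnq; exists q.
move=> rho'; apply: NNPP => H; case: (Hnz _ H) => _ H2; apply: Hnq; by exists (rho' (root_pos _)).
Qed.

End L.

Theorem lemma3p5 (Sigma : finType) (rank : Sigma -> nat)
  (Hrank0 : exists s : Sigma, rank s = 0%N)
  (B : strong_bimonoid) (Q : finType) (HQ : 0 < #|Q|) (A : wta rank B Q)
  (s : Sigma) (ch : 'I_(rank s) -> tree rank) :
  let xi := Node s ch in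
  ((exists i : 'I_(rank s), is_empty (hV_nz A (ch i))) -> is_empty (hV_nz A xi)) /\
  ((exists i : 'I_(rank s), is_empty (R_nz A (ch i))) -> is_empty (R_nz A xi)) /\
  (bu_deterministic A ->
     (at_most_one (hV_nz A xi) /\ at_most_one (R_nz A xi)) /\
     ((is_empty (hV_nz A xi) /\ is_empty (R_nz A xi)) \/
      exists q : Q,
        is_singleton (hV_nz A xi) q /\ is_singleton (R_nz A xi) q /\
        exists rho : run Q xi,
          (qrun q rho /\ wt A rho <> bzero B) /\
          (forall rho' : run Q xi, qrun q rho' -> wt A rho' <> bzero B -> rho' = rho) /\
          hV A xi q = wt A rho)).
Proof.
move=> xi; split; last split.
- move=> [i Hi] q; rewrite /hV_nz /xi hV_node; apply; apply: sum0 => qs _.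
  rewrite (@prod0_ord _ _ _ i) ?bmul0l //.
  by apply: NNPP; apply: Hi.
- move=> [i Hi] q [rho [_ Hw]]; apply: Hw; rewrite /xi wt_node (@prod0_ord _ _ _ i) ?bmul0l //.
  apply: NNPP => H; apply: (Hi (rst rho i (root_pos _))); exists (rst rho i); split => //.
move=> det; case: (inv_all det xi) => [[H1 H2] | [q [rho [Hr Hw Hh Ho U]]]].
  split; first split.
  - by move=> q q' H; case: H; rewrite H1.
  - by move=> q q' [rho' [_ H]]; case: H; rewrite H2.
  by left; split => q; [rewrite /hV_nz H1 | case => rho []; rewrite H2].
have hVnz : forall q', hV_nz A xi q' <-> q' = q.
  move=> q'; split => [H | ->]; last by rewrite /hV_nz Hh.
  by apply: NNPP => nq; apply: H; apply: Ho.
have Rnz : forall q', R_nz A xi q' <-> q' = q.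
  move=> q'; split => [[rho' [Hq H]] | ->]; last by exists rho.
  by rewrite -Hq (U _ H).
split.
  by split => q1 q2; rewrite ?hVnz ?Rnz => -> ->.
right; exists q; split => //; split => //.
exists rho; split => //; split => // rho' _ H; exact: U.
Qed.
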